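(* Let $S$ be a semiring and let $L\xrightarrow{f}M\xrightarrow{g}N$ be $S$-linear maps of left $S$-semimodules. (1) Suppose $g$ is injective. (a) $f$ is $k$-normal if and only if $g\circ f$ is $k$-normal. (b) If $g\circ f$ is $i$-normal (resp. normal), then $f$ is $i$-normal (resp. normal). (c) If moreover $g$ is $i$-normal, then $f$ is $i$-normal (resp. normal) if and only if $g\circ f$ is $i$-normal (resp. normal). (2) Suppose $f$ is surjective. (a) $g$ is $i$-normal if and only if $g\circ f$ is $i$-normal. (b) If $g\circ f$ is $k$-normal (resp. normal), then $g$ is $k$-normal (resp. normal). (c) If moreover $f$ is $k$-normal, then $g$ is $k$-normal (resp. normal) if and only if $g\circ f$ is $k$-normal (resp. normal).
   Context: A semiring $(S,+,0,\cdot,1)$ consists of a commutative monoid $(S,+,0)$ and a monoid $(S,\cdot,1)$ with $0\neq 1$, absorbing zero and both distributive laws; left $S$-semimodules and $S$-linear maps are as for modules over rings (without subtraction). For an $S$-linear map $h:X\to Y$, $\mathrm{Ker}(h)=\{x\in X\mid h(x)=0\}$. $h$ is $k$-normal if $h(x)=h(x')$ implies $x+k=x'+k'$ for some $k,k'\in\mathrm{Ker}(h)$; $h$ is $i$-normal if $h(X)=\overline{h(X)}$, where $\overline{h(X)}=\{y\in Y\mid y+h(x_1)=h(x_2)\text{ for some }x_1,x_2\in X\}$; $h$ is normal if it is both $k$-normal and $i$-normal. *)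

(* Defs.v *)
From HB Require Import structures.
From mathcomp Require Import all_boot all_algebra.
Set Implicit Arguments. Unset Strict Implicit. Unset Printing Implicit Defensive.
Import GRing.Theory.
Local Open Scope ring_scope.

Definition Ker (X Y : nmodType) (h : X -> Y) : X -> Prop := fun x => h x = 0.

Definition img_closure (X Y : nmodType) (h : X -> Y) : Y -> Prop :=
  fun y => exists x1 x2, y + h x1 = h x2.

Definition k_normal (X Y : nmodType) (h : X -> Y) : Prop :=
  forall x x', h x = h x' ->
    exists k k', Ker h k /\ Ker h k' /\ x + k = x' + k'.

Definition i_normal (X Y : nmodType) (h : X -> Y) : Prop :=
  forall y, (exists x, h x = y) <-> img_closure h y.

Definition normal (X Y : nmodType) (h : X -> Y) : Prop :=
  k_normal h /\ i_normal h.

Definition surjective (A B : Type) (h : A -> B) : Prop := forall b, exists a, h a = b.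

(* Main.v *)
Require Import Defs.
From HB Require Import structures.
From mathcomp Require Import all_boot all_algebra.
Import GRing.Theory.
Local Open Scope ring_scope.

Theorem mainTheorem4 (S : nzSemiRingType) (L M N : lSemiModType S)
  (f : {linear L -> M}) (g : {linear M -> N}) :
  (injective g ->
     (k_normal f <-> k_normal (g \o f)) /\
     (i_normal (g \o f) -> i_normal f) /\
     (normal (g \o f) -> normal f) /\
     (i_normal g ->
        (i_normal f <-> i_normal (g \o f)) /\
        (normal f <-> normal (g \o f)))) /\
  (surjective f ->
     (i_normal g <-> i_normal (g \o f)) /\
     (k_normal (g \o f) -> k_normal g) /\
     (normal (g \o f) -> normal g) /\
     (k_normal f ->
        (k_normal g <-> k_normal (g \o f)) /\
        (normal g <-> normal (g \o f)))).
Proof.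
have triv : forall (X Y : nmodType) (h : {additive X -> Y}) y,
    (exists x, h x = y) -> img_closure h y.
  by move=> X Y h y [x <-]; exists 0, x; rewrite raddf0 addr0.
have triv' : forall (X Y : nmodType) (h : X -> Y) x0, h x0 = 0 -> forall y,
    (exists x, h x = y) -> img_closure h y.
  by move=> X Y h x0 h0 y [x <-]; exists x0, x; rewrite h0 addr0.
split.
  move=> ginj.
  have kerE : forall x, Ker (g \o f) x <-> Ker f x.
    move=> x; rewrite /Ker /=; split; last by move=> ->; rewrite raddf0.
    by move=> h; apply: ginj; rewrite h raddf0.
  have kf : k_normal f <-> k_normal (g \o f).
    split.
      move=> kn x x' /= /ginj /kn [k [k' [h1 [h2 h3]]]].
      by exists k, k'; split; [apply/kerE | split; [apply/kerE|]].
    move=> kn x x' e; have /kn [k [k' [h1 [h2 h3]]]] : (g \o f) x = (g \o f) x'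
      by rewrite /= e.
    by exists k, k'; split; [apply/kerE | split; [apply/kerE|]].
  have if1 : i_normal (g \o f) -> i_normal f.
    move=> inn y; split; first exact: (triv _ _ f).
    move=> [x1 [x2 e]].
    have : img_closure (g \o f) (g y) by exists x1, x2; rewrite /= -e raddfD.
    by move/inn => [x /= /ginj e']; exists x.
  have if2 : i_normal g -> i_normal f -> i_normal (g \o f).
    move=> ig ifn z; split; first by apply: (triv' _ _ _ 0); rewrite /= !raddf0.
    move=> [x1 [x2 /= e]].
    have : img_closure g z by exists (f x1), (f x2).
    move/ig => [m em]; subst z.
    have : img_closure f m by exists x1, x2; apply: ginj; rewrite raddfD.
    by move/ifn => [x ex]; exists x; rewrite /= ex.
  split; first exact: kf.
  split; first exact: if1.
  split; first by move=> [a b]; split; [apply/kf | apply: if1].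
  move=> ig; split; first by split; [apply: if2 | apply: if1].
  by split; move=> [a b]; split; [apply/kf | apply: if2 | apply/kf | apply: if1].
move=> fs.
have ig : i_normal g <-> i_normal (g \o f).
  split.
    move=> ign z; split; first by apply: (triv' _ _ _ 0); rewrite /= !raddf0.
    move=> [x1 [x2 e]].
    have : img_closure g z by exists (f x1), (f x2).
    by move/ign => [m <-]; have [x <-] := fs m; exists x.
  move=> ign z; split; first exact: (triv _ _ g).
  move=> [m1 [m2 e]]; have [x1 e1] := fs m1; have [x2 e2] := fs m2.
  have : img_closure (g \o f) z by exists x1, x2; rewrite /= e1 e2.
  by move/ign => [x <-]; exists (f x).
have kg1 : k_normal (g \o f) -> k_normal g.
  move=> kn m m' e; have [x ex] := fs m; have [x' ex'] := fs m'; subst m m'.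
  have [k [k' [h1 [h2 h3]]]] := kn x x' e.
  by exists (f k), (f k'); rewrite -!raddfD h3.
have kg2 : k_normal f -> k_normal g -> k_normal (g \o f).
  move=> kf kgn x x' e.
  have [k [k' [h1 [h2 h3]]]] := kgn _ _ e.
  have [a ea] := fs k; have [a' ea'] := fs k'; subst k k'.
  have [c [c' [h4 [h5 h6]]]] : exists c c', Ker f c /\ Ker f c' /\
     (x + a) + c = (x' + a') + c' by apply: kf; rewrite !raddfD.
  have E1 : f (a + c) = f a by rewrite raddfD; exact: (etrans (congr1 (fun t => f a + t) h4) (addr0 _)).
  have E2 : f (a' + c') = f a' by rewrite raddfD; exact: (etrans (congr1 (fun t => f a' + t) h5) (addr0 _)).
  exists (a + c), (a' + c'); rewrite /Ker /= E1 E2; split => //; split => //.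
  by rewrite !addrA.
split; first exact: ig.
split; first exact: kg1.
split; first by move=> [a b]; split; [apply: kg1 | apply/ig].
move=> kf; split; first by split; [apply: kg2 | apply: kg1].
by split; move=> [a b]; split; [apply: kg2 | apply/ig | apply: kg1 | apply/ig].
Qed.
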